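(* Let $k\ge1$ and $a_1,\dots,a_k\in\Sigma$ with $a_i\neq a_{i+1}$ for $1\le i<k$, and let $L[a_1,\dots,a_k]=\Sigma^*a_1\Sigma^*a_2\Sigma^*\cdots\Sigma^*a_k\Sigma^*$. Then the MON-1qfa $A[a_1,\dots,a_k]$ recognizes $L[a_1,\dots,a_k]$ with cut-point $\lambda=\frac{1}{2^{2k+1}}$ isolated by $\delta=\frac{1}{2^{2(k+1)}}$.
   Context: A MON-1qfa over a finite alphabet $\Sigma$ is a tuple $A=\langle\Sigma\cup\{\#\},(O_c)_{c\in\Sigma\cup\{\#\}},\pi_0,F\rangle$, where $\pi_0\in\mathbb{C}^{1\times m}$ has norm $1$, each $O_c$ is an observable with spectral decomposition into orthogonal projectors $P_c(r)$, $r\in V(O_c)$, and $F\subseteq V(O_\#)$. For $x=x_1\cdots x_n$, with $\rho_0=\pi_0^\dagger\pi_0$ and $\rho_i=\sum_{r}P_{x_i}(r)\rho_{i-1}P_{x_i}(r)$, the acceptance probability is $p_A(x)=\sum_{r\in F}\mathrm{tr}(P_\#(r)\rho_n)$. $A$ recognizes $L$ with cut-point $\lambda$ isolated by $\delta>0$ if for all $x\in\Sigma^*$: $x\in L\Leftrightarrow p_A(x)>\lambda$, and $|p_A(x)-\lambda|\ge\delta$. Construction: let $S=\{a_1,\dots,a_k\}$; for $\alpha\in S$ let $j^{(\alpha)}_1<\dots<j^{(\alpha)}_{\#\alpha}$ be all indices $j$ with $a_j=\alpha$. Define the $(k+1)\times(k+1)$ matrices: $(P_\nearrow^{(k)}(\alpha))_{rs}=1$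 if $r=s$ and $r\notin\{j^{(\alpha)}_i,j^{(\alpha)}_i+1\}$ for all $i$; $=\frac12$ if $r,s\in\{j^{(\alpha)}_i,j^{(\alpha)}_i+1\}$ for some $i$; $=0$ otherwise. $(P_\searrow^{(k)}(\alpha))_{rs}=\frac12$ if $r=s\in\{j^{(\alpha)}_i,j^{(\alpha)}_i+1\}$ for some $i$; $=-\frac12$ if $r\neq s$ and $r,s\in\{j^{(\alpha)}_i,j^{(\alpha)}_i+1\}$ for some $i$; $=0$ otherwise. (These are complementary orthogonal projectors.) Let $e_j$ be the $j$-th standard basis row vector of length $k+1$. $A[a_1,\dots,a_k]$ is the MON-1qfa of dimension $k+1$ with initial state $\pi_0=e_1$; for $\alpha\in S$, $O_\alpha$ is the two-outcome observable with projectors $P_\nearrow^{(k)}(\alpha)$ and $P_\searrow^{(k)}(\alpha)$; for $\sigma\in\Sigma\setminus S$, $O_\sigma$ has the single projector $I_{(k+1)\times(k+1)}$; $O_\#$ is a two-outcome observable whose accepting outcome (the set $F$) has projector $e_{k+1}^Te_{k+1}$ and whose other outcome has projector $I-e_{k+1}^Te_{k+1}$. *)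

(* Defs.v *)
From HB Require Import structures.
From mathcomp Require Import all_boot all_order all_algebra algC.
Set Implicit Arguments. Unset Strict Implicit. Unset Printing Implicit Defensive.
Import Order.TTheory GRing.Theory Num.Theory.
Local Open Scope ring_scope.

(* An observable is represented by the list of orthogonal projectors  *)
(* P_c(r) of its spectral decomposition (one per outcome r in V(O_c)).*)
(* The end-marker observable O_# is given by the list of projectors   *)
(* P_#(r) for r in F (mq_acc) and the list of the other ones (mq_rej).*)
Record mon1qfa (Sigma : finType) (m : nat) := Mon1qfa {
  mq_pi0 : 'rV[algC]_m;
  mq_obs : Sigma -> seq 'M[algC]_m;
  mq_acc : seq 'M[algC]_m;
  mq_rej : seq 'M[algC]_m }.

Definition adjmx p q (A : 'M[algC]_(p, q)) : 'M[algC]_(q, p) := map_mx Num.conj A^T.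

Definition is_orth_projector m (P : 'M[algC]_m) : Prop :=
  adjmx P = P /\ P *m P = P.

Definition is_observable m (Ps : seq 'M[algC]_m) : Prop :=
  (forall P, P \in Ps -> is_orth_projector P) /\
  (forall i j, (i < size Ps)%N -> (j < size Ps)%N -> i != j ->
     nth 0 Ps i *m nth 0 Ps j = 0) /\
  \sum_(P <- Ps) P = 1%:M.

Definition is_mon1qfa (Sigma : finType) m (A : mon1qfa Sigma m) : Prop :=
  \sum_(i < m) `|mq_pi0 A 0 i| ^+ 2 = 1 /\
  (forall c, is_observable (mq_obs A c)) /\
  is_observable (mq_acc A ++ mq_rej A).

Definition rho0 (Sigma : finType) m (A : mon1qfa Sigma m) : 'M[algC]_m :=
  adjmx (mq_pi0 A) *m mq_pi0 A.

Definition rho_step (Sigma : finType) m (A : mon1qfa Sigma m) (c : Sigma)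
  (rho : 'M[algC]_m) : 'M[algC]_m :=
  \sum_(P <- mq_obs A c) P *m rho *m P.

Definition rho_final (Sigma : finType) m (A : mon1qfa Sigma m) (x : seq Sigma) :=
  foldl (fun rho c => rho_step A c rho) (rho0 A) x.

Definition accept_prob (Sigma : finType) m (A : mon1qfa Sigma m) (x : seq Sigma)
  : algC := \sum_(P <- mq_acc A) \tr (P *m rho_final A x).

Definition recognizes_isolated (Sigma : finType) m (A : mon1qfa Sigma m)
  (L : seq Sigma -> Prop) (lambda delta : algC) : Prop :=
  0 < delta /\
  forall x : seq Sigma,
    (L x <-> lambda < accept_prob A x) /\ delta <= `|accept_prob A x - lambda|.

Fixpoint inL (Sigma : finType) (a : seq Sigma) (x : seq Sigma) : Prop :=
  match a with
  | [::] => True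
  | c :: a' => exists u v, x = u ++ c :: v /\ inL a' v
  end.

(* Indices are 0-based: paper's index r in {1..k+1} is r-1 here, and  *)
(* paper's j with a_j = alpha (1<=j<=k) is j-1 here, with block        *)
(* {j-1, j}.                                                           *)
Section Construction.
Variables (Sigma : finType) (a : seq Sigma).
Let k := size a.

Definition in_block (alpha : Sigma) (r : nat) : bool :=
  has (fun j => (nth alpha a j == alpha) && ((r == j) || (r == j.+1)))
      (iota 0 k).

Definition same_block (alpha : Sigma) (r s : nat) : bool :=
  has (fun j => [&& nth alpha a j == alpha, (r == j) || (r == j.+1)
                  & (s == j) || (s == j.+1)])
      (iota 0 k).

Definition P_up (alpha : Sigma) : 'M[algC]_(k.+1) :=
  \matrix_(r < k.+1, s < k.+1)
    if (r == s :> nat) && ~~ in_block alpha r then 1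
    else if same_block alpha r s then 2^-1 else 0.

Definition P_down (alpha : Sigma) : 'M[algC]_(k.+1) :=
  \matrix_(r < k.+1, s < k.+1)
    if (r == s :> nat) && in_block alpha r then 2^-1
    else if (r != s :> nat) && same_block alpha r s then - 2^-1 else 0.

Definition A_constr : mon1qfa Sigma k.+1 :=
  {| mq_pi0 := delta_mx 0 ord0;
     mq_obs := fun sigma => if sigma \in a then [:: P_up sigma; P_down sigma]
                            else [:: 1%:M];
     mq_acc := [:: delta_mx ord_max ord_max];
     mq_rej := [:: 1%:M - delta_mx ord_max ord_max] |}.

End Construction.

(* Main.v *)
Require Import Defs.
From HB Require Import structures.
From mathcomp Require Import all_boot all_order all_algebra algC.
From mathcomp Require Import zify ring lra.
Set Implicit Arguments. Unset Strict Implicit. Unset Printing Implicit Defensive.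
Import Order.TTheory GRing.Theory Num.Theory.
Local Open Scope ring_scope.

Definition rho_final_from (Sigma : finType) m (A : mon1qfa Sigma m) (x : seq Sigma) rho :=
  foldl (fun rho c => rho_step A c rho) rho x.

Section S.
Variables (Sigma : finType) (a : seq Sigma).
Hypothesis Hs : sorted (fun x y => x != y) a.


Definition Lb (c : Sigma) (r : nat) : bool := (r < size a)%N && (nth c a r == c).
Definition Rb (c : Sigma) (r : nat) : bool := (0 < r)%N && (r <= size a)%N && (nth c a r.-1 == c).

Lemma distinct c r : (r.+1 < size a)%N -> nth c a r != nth c a r.+1.
Proof. by move=> h; apply: (sortedP c Hs). Qed.

Lemma RbS c r : Rb c r.+1 = Lb c r.
Proof. by rewrite /Rb /Lb /=. Qed.

Lemma Rb0 c : Rb c 0 = false.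
Proof. by []. Qed.

Lemma LbS c r : Lb c r -> Lb c r.+1 = false.
Proof.
rewrite /Lb => /andP[h1 /eqP h2]; apply/negbTE/negP => /andP[h3 /eqP h4].
by move: (distinct c h3); rewrite h2 h4 eqxx.
Qed.

Lemma LR_excl c r : Lb c r -> Rb c r = false.
Proof.
case: r => [|r] //; rewrite RbS => h; apply/negbTE/negP => h'.
by rewrite (LbS h') in h.
Qed.

Lemma in_blockE c r : in_block a c r = Lb c r || Rb c r.
Proof.
rewrite /in_block /Lb /Rb; apply/hasP/orP.
- move=> [j]; rewrite mem_iota add0n => /andP[_ hj] /andP[/eqP ha /orP[/eqP->|/eqP->]].
  + by left; rewrite hj ha eqxx.
  + by right; rewrite /= ha eqxx hj andbT.
- move=> [/andP[h1 h2]|/andP[/andP[h0 h1] h2]].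
  + by exists r; rewrite ?mem_iota ?add0n // h2 eqxx.
  + exists r.-1; first by rewrite mem_iota add0n; lia.
    rewrite h2 /=; case: r h0 {h1 h2} => // r _; by rewrite eqxx orbT.
Qed.

Lemma same_blockE c r s : same_block a c r s =
  (Lb c r && ((s == r) || (s == r.+1))) || (Rb c r && ((s == r) || (s == r.-1))).
Proof.
rewrite /same_block /Lb /Rb; apply/hasP/orP.
- move=> [j]; rewrite mem_iota add0n => /andP[_ hj] /and3P[/eqP ha /orP[/eqP->|/eqP->] hs].
  + by left; rewrite hj ha eqxx /=; move: hs; rewrite orbC.
  + by right; rewrite /= ha eqxx hj andbT; move: hs; rewrite orbC.
- move=> [/andP[/andP[h1 h2] hs]|/andP[/andP[/andP[h0 h1] h2] hs]].
  + exists r; first by rewrite mem_iota add0n h1.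
    by rewrite h2 eqxx /=; move: hs => /orP[/eqP->|/eqP->]; rewrite !eqxx ?orbT.
  + exists r.-1; first by rewrite mem_iota add0n; lia.
    rewrite h2 /=; case: r h0 {h1 h2} hs => // r _ /=.
    by move=> /orP[/eqP->|/eqP->]; rewrite !eqxx ?orbT.
Qed.


Definition blk c r := Lb c r || Rb c r.
Definition pr c r := if Lb c r then r.+1 else if Rb c r then r.-1 else r.

Lemma pr_lt c (r : 'I_(size a).+1) : (pr c r < (size a).+1)%N.
Proof.
rewrite /pr /Lb /Rb; case: ifP => [/andP[h _]|_]; first by [].
case: ifP => // _; have := ltn_ord r; lia.
Qed.

Lemma pr_inv c r : blk c r -> pr c (pr c r) = r /\ blk c (pr c r).
Proof.
rewrite /blk /pr; case hL: (Lb c r) => /=.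
- by rewrite (LbS hL) RbS hL.
- case: r hL => [|r] hL //=; rewrite RbS => hR; rewrite hR /=; split; rewrite ?hR //.
Qed.

Lemma pr_neq c r : blk c r -> pr c r != r.
Proof.
rewrite /blk /pr; case: (Lb c r) => /=; first by move=> _; apply/eqP; lia.
by case: r => [|r] //= ->; apply/eqP; lia.
Qed.

Lemma pr_id c r : ~~ blk c r -> pr c r = r.
Proof. by rewrite /blk /pr; case: (Lb c r); case: (Rb c r). Qed.

Definition prO c (r : 'I_(size a).+1) : 'I_(size a).+1 := inord (pr c r).

Lemma prOE c r : val (prO c r) = pr c r.
Proof. by rewrite /prO /= inordK // pr_lt. Qed.

Lemma prO_inv c (r : 'I_(size a).+1) : blk c r -> prO c (prO c r) = r.
Proof. by move=> h; apply: val_inj; rewrite !prOE; case: (pr_inv h). Qed.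

Lemma blk_prO c (r : 'I_(size a).+1) : blk c (prO c r) = blk c r.
Proof.
case h: (blk c r); first by rewrite prOE; case: (pr_inv h).
by rewrite prOE pr_id ?h.
Qed.

Lemma prO_neq c (r : 'I_(size a).+1) : blk c r -> prO c r != r.
Proof. by move=> h; rewrite -val_eqE prOE pr_neq. Qed.

Lemma prO_id c (r : 'I_(size a).+1) : ~~ blk c r -> prO c r = r.
Proof. by move=> h; apply: val_inj; rewrite prOE pr_id. Qed.

Definition mxf c (al ga : bool -> algC) : 'M[algC]_((size a).+1) :=
  \matrix_(r, s) if s == r then al (blk c r) else if s == prO c r then ga (blk c r) else 0.

Lemma mxf_sum c al ga r (f : 'I_(size a).+1 -> algC) :
  \sum_t mxf c al ga r t * f t =
  if blk c r then al true * f r + ga true * f (prO c r) else al false * f r.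
Proof.
rewrite (bigD1 r) //= mxE eqxx; case hb: (blk c r).
- rewrite (bigD1 (prO c r)) /=; last by rewrite prO_neq.
  rewrite mxE (negbTE (prO_neq hb)) eqxx hb addrA big1 ?addr0 //.
  by move=> t /andP[h1 h2]; rewrite mxE (negbTE h1) (negbTE h2) mul0r.
- rewrite big1 ?addr0 // => t h; rewrite mxE (negbTE h) prO_id ?hb //.
  by rewrite (negbTE h) mul0r.
Qed.

Lemma mxf_ext c al1 ga1 al2 ga2 : al1 =1 al2 -> ga1 true = ga2 true ->
  mxf c al1 ga1 = mxf c al2 ga2.
Proof.
move=> ha hg; apply/matrixP => r s; rewrite !mxE ha.
case: (eqVneq s r) => // ns; case hb: (blk c r); first by rewrite hg.
by rewrite prO_id ?hb // (negbTE ns).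
Qed.

Lemma mxf_mul c al1 ga1 al2 ga2 :
  mxf c al1 ga1 *m mxf c al2 ga2 =
  mxf c (fun b => if b then al1 b * al2 b + ga1 b * ga2 b else al1 b * al2 b)
        (fun b => al1 b * ga2 b + ga1 b * al2 b).
Proof.
apply/matrixP => r s; rewrite mxE mxf_sum [RHS]mxE !mxE blk_prO.
case hb: (blk c r).
- rewrite prO_inv //; case: (eqVneq s r) => [->|ns].
  + by rewrite eq_sym (negbTE (prO_neq hb)).
  + by case: (s == prO c r); rewrite ?mulr0 ?addr0.
- by rewrite prO_id ?hb //; case: (s == r); rewrite ?mulr0.
Qed.


Definition aup (b : bool) : algC := if b then 2^-1 else 1.
Definition adn (b : bool) : algC := if b then 2^-1 else 0.

Lemma blk_cases c r : [\/ Lb c r /\ pr c r = r.+1 /\ Rb c r = false,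
  Lb c r = false /\ Rb c r /\ pr c r = r.-1 | Lb c r = false /\ Rb c r = false /\ pr c r = r].
Proof.
rewrite /pr; case hL: (Lb c r); first by constructor 1; rewrite (LR_excl hL).
by case hR: (Rb c r); [constructor 2| constructor 3].
Qed.

Lemma Pup_mxf c : P_up a c = mxf c aup (fun _ => 2^-1).
Proof.
apply/matrixP => r s; rewrite !mxE in_blockE same_blockE /blk /aup -!val_eqE prOE /=.
have [[hL [hp hR]]|[hL [hR hp]]|[hL [hR hp]]] := blk_cases c r;
  rewrite hL hR hp /= ?andbT ?andbF ?orbF.
- by case: (s == r :> nat).
- by case: (s == r :> nat).
- by rewrite eq_sym; case: (s == r :> nat).
Qed.

Lemma Pdn_mxf c : P_down a c = mxf c adn (fun _ => - 2^-1).
Proof.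
apply/matrixP => r s; rewrite !mxE in_blockE same_blockE /blk /adn -!val_eqE prOE /=.
have [[hL [hp hR]]|[hL [hR hp]]|[hL [hR hp]]] := blk_cases c r;
  rewrite hL hR hp /= ?andbT ?andbF ?orbF.
- by case: ifP => [/eqP->|]; rewrite ?eqxx // eq_sym => ->.
- by case: ifP => [/eqP->|]; rewrite ?eqxx // eq_sym => ->.
- by case: (s == r :> nat).
Qed.


Lemma mxf_sym c al ga (r s : 'I_(size a).+1) : mxf c al ga s r = mxf c al ga r s.
Proof.
rewrite !mxE; case: (eqVneq s r) => [->|ns]; first by rewrite ?eqxx.
case: (eqVneq s (prO c r)) => [e|np].
- have hb : blk c r by apply: contraNT ns => hb; rewrite e prO_id.
  by rewrite e prO_inv // eqxx blk_prO.
- case: (eqVneq r (prO c s)) => [e|] //.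
  have hb : blk c s by apply: contraNT ns => hb; rewrite e prO_id.
  by move: np; rewrite e prO_inv // eqxx.
Qed.

Lemma mxf_adj c al ga : (forall b, (al b)^* = al b) -> (forall b, (ga b)^* = ga b) ->
  adjmx (mxf c al ga) = mxf c al ga.
Proof.
move=> ha hg; apply/matrixP => r s; rewrite /adjmx mxE mxE mxf_sym.
rewrite mxE; case: ifP => _; first by rewrite ha.
by case: ifP => _; rewrite ?hg ?conjC0.
Qed.

Lemma mxf_add c al1 ga1 al2 ga2 :
  mxf c al1 ga1 + mxf c al2 ga2 = mxf c (fun b => al1 b + al2 b) (fun b => ga1 b + ga2 b).
Proof.
apply/matrixP => r s; rewrite !mxE.
by case: ifP => _ //; case: ifP => _ //; rewrite addr0.
Qed.

Lemma mxf0 c : mxf c (fun _ => 0) (fun _ => 0) = 0.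
Proof. by apply/matrixP => r s; rewrite !mxE; case: ifP => _ //; case: ifP. Qed.

Lemma mxf1 c : mxf c (fun _ => 1) (fun _ => 0) = 1%:M.
Proof.
apply/matrixP => r s; rewrite !mxE eq_sym.
by case: (eqVneq r s) => _ //; case: ifP.
Qed.

Lemma conj_half : (2^-1 : algC)^* = 2^-1.
Proof. by rewrite conj_Creal // rpredV realn. Qed.

Lemma conj_aup b : (aup b)^* = aup b.
Proof. by case: b; rewrite /aup ?conj_half ?conjC1. Qed.
Lemma conj_adn b : (adn b)^* = adn b.
Proof. by case: b; rewrite /adn ?conj_half ?conjC0. Qed.

Lemma Pup_proj c : is_orth_projector (P_up a c).
Proof.
rewrite /is_orth_projector Pup_mxf mxf_adj; last 2 first.
- exact: conj_aup.
- by move=> _; exact: conj_half.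
split=> //; rewrite mxf_mul; apply: mxf_ext => [[]|] /=; rewrite /aup ?mulr1 //; by field.
Qed.

Lemma Pdn_proj c : is_orth_projector (P_down a c).
Proof.
rewrite /is_orth_projector Pdn_mxf mxf_adj; last 2 first.
- exact: conj_adn.
- by move=> _; rewrite conj_Creal // rpredN rpredV realn.
split=> //; rewrite mxf_mul; apply: mxf_ext => [[]|] /=; rewrite /adn ?mulr0 //; by field.
Qed.

Lemma Pupdn c : P_up a c *m P_down a c = 0.
Proof.
rewrite Pup_mxf Pdn_mxf mxf_mul -(mxf0 c).
apply: mxf_ext => [[]|] /=; rewrite /aup /adn ?mulr0 //; by field.
Qed.

Lemma Pdnup c : P_down a c *m P_up a c = 0.
Proof.
rewrite Pup_mxf Pdn_mxf mxf_mul -(mxf0 c).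
apply: mxf_ext => [[]|] /=; rewrite /aup /adn ?mulr0 //; by field.
Qed.

Lemma Pupdn_sum c : P_up a c + P_down a c = 1%:M.
Proof.
rewrite Pup_mxf Pdn_mxf mxf_add -(mxf1 c).
apply: mxf_ext => [[]|] /=; rewrite /aup /adn ?addr0 //; by field.
Qed.

Lemma key c al ga (rho : 'M[algC]_((size a).+1)) r :
  (mxf c al ga *m rho *m mxf c al ga) r r =
  if blk c r then al true * (al true * rho r r + ga true * rho (prO c r) r)
     + ga true * (al true * rho r (prO c r) + ga true * rho (prO c r) (prO c r))
  else al false * (al false * rho r r).
Proof.
rewrite mxE; under eq_bigr => t _ do rewrite mulrC mxf_sym.
rewrite mxf_sum !mxE !mxf_sum; case: (blk c r) => //.
Qed.

Lemma notin_blk c r : c \notin a -> blk c r = false.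
Proof.
move=> hc; rewrite /blk /Lb /Rb; apply/negbTE; rewrite negb_or; apply/andP; split.
- apply/negP => /andP[h /eqP e]; by move: hc; rewrite -e mem_nth.
- apply/negP => /andP[/andP[h0 h1] /eqP e]; move: hc; rewrite -e mem_nth //; by case: r h0 h1 {e}.
Qed.

Lemma step_diag c (rho : 'M[algC]_((size a).+1)) r :
  rho_step (A_constr a) c rho r r =
  if blk c r then (rho r r + rho (prO c r) (prO c r)) / 2 else rho r r.
Proof.
rewrite /rho_step /=; case: ifP => hc.
- rewrite big_cons big_cons big_nil addr0 mxE Pup_mxf Pdn_mxf !key.
  case: (blk c r); rewrite /aup /adn; by field.
- by rewrite big_cons big_nil addr0 mul1mx mulmx1 notin_blk ?hc.
Qed.

Definition stepD c (D : nat -> rat) : nat -> rat :=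
  fun r => if blk c r then (D r + D (pr c r)) / 2 else D r.
Definition stepM c m := if Lb c m then m.+1 else m.

Definition Inv (D : nat -> rat) m := [/\ (m <= size a)%N,
  forall r, (r < size a)%N -> D r.+1 <= D r,
  forall r, (m < r)%N -> (r <= size a)%N -> D r = 0 &
  (2^+m)^-1 <= D m].

Lemma stepD_E c D r : stepD c D r =
  if Lb c r then (D r + D r.+1) / 2 else if Rb c r then (D r.-1 + D r) / 2 else D r.
Proof.
rewrite /stepD /blk; have [[hL [hp hR]]|[hL [hR hp]]|[hL [hR hp]]] := blk_cases c r;
  rewrite hL hR hp //= (addrC (D r)).
by []. Qed.

Lemma Inv_step c D m : Inv D m -> Inv (stepD c D) (stepM c m).
Proof.
case=> hm hmono hz hb; rewrite /stepM; split.
- case hL: (Lb c m) => //; by move: hL => /andP[].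
- move=> r hr; rewrite !stepD_E RbS.
  case hL: (Lb c r); first by rewrite (LbS hL) /=.
  have h1 : (if Lb c r.+1 then (D r.+1 + D r.+2) / 2 else D r.+1) <= D r.+1.
    case hL1: (Lb c r.+1) => //; move: hL1 => /andP[h _].
    have := hmono _ h; lra.
  have h2 : D r <= (if Rb c r then (D r.-1 + D r) / 2 else D r).
    case hR: (Rb c r) => //; case: r hr hL hR {h1} => [|q] //= hr _ /andP[/andP[_ hq] _].
    have := hmono _ hq; lra.
  have := hmono _ hr; lra.
- move=> r hr hrk; rewrite stepD_E.
  have hmr : (m < r)%N by case: (Lb c m) hr => //; lia.
  case hL: (Lb c r).
  + move: hL => /andP[hrk' _]; rewrite (hz r) // (hz r.+1); first lra; lia.
  + case hR: (Rb c r); last by rewrite hz.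
    case: r hr hrk hmr hL hR => [|q] //= hr hrk hmr _ hR.
    rewrite (hz q.+1) //; case: (ltngtP m q) => [hq|hq|hq].
    * by rewrite hz //; exact: ltnW.
    * exfalso; lia.
    * by move: hr; rewrite -hq -(RbS c m) hq hR ltnn.
- case hL: (Lb c m).
  + rewrite stepD_E (LbS hL) RbS hL /= (hz m.+1) //; last by move: hL => /andP[].
    rewrite exprS invfM; move: hb; lra.
  + rewrite stepD_E hL; case hR: (Rb c m) => //.
    case: m hm hmono hz hb hL hR => [|q] //= hm hmono hz hb _ /andP[/andP[_ hq] _].
    have := hmono _ hq; move: hb; lra.
Qed.

Definition fM (m : nat) (c : Sigma) := stepM c m.
Definition fD (D : nat -> rat) (c : Sigma) := stepD c D.

Lemma foldM_k x : foldl fM (size a) x = size a.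
Proof.
elim: x => //= c x IH; rewrite /fM /stepM /Lb ltnn /=; exact: IH.
Qed.

Lemma greedy x m : (m <= size a)%N -> subseq (drop m a) x = (foldl fM m x == size a).
Proof.
elim: x m => [|c x IH] m hm /=.
- by rewrite -size_eq0 size_drop subn_eq0 eqn_leq hm.
- case: (ltngtP m (size a)) hm => // hm _.
  + have hs : fM m c = if nth c a m == c then m.+1 else m by rewrite /fM /stepM /Lb hm.
    rewrite (drop_nth c) //= hs; case: eqP => e.
    * by rewrite IH.
    * by rewrite -(drop_nth c) // IH // ltnW.
  + by rewrite hm drop_size; have /= -> := foldM_k (c :: x); rewrite eqxx.
Qed.

Lemma Inv_fold x D m : Inv D m -> Inv (foldl fD D x) (foldl fM m x).
Proof. by elim: x D m => //= c x IH D m h; apply: IH; exact: Inv_step. Qed.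

Lemma diag_fold x (rho : 'M[algC]_((size a).+1)) (D : nat -> rat) :
  (forall r : 'I_(size a).+1, rho r r = ratr (D r)) ->
  forall r : 'I_(size a).+1,
  rho_final_from (A_constr a) x rho r r = ratr (foldl fD D x r).
Proof.
elim: x rho D => //= c x IH rho D h; apply: IH => r.
rewrite step_diag /fD /stepD -prOE !h; case: (blk c r) => //.
by rewrite fmorph_div rmorphD rmorph_nat.
Qed.

End S.

Lemma obs2 m (P Q : 'M[algC]_m) : is_orth_projector P -> is_orth_projector Q ->
  P *m Q = 0 -> Q *m P = 0 -> P + Q = 1%:M -> is_observable [:: P; Q].
Proof.
move=> hP hQ hPQ hQP hs; split; [|split].
- by move=> X; rewrite !inE => /orP[/eqP->|/eqP->].
- by case=> [|[|//]] [|[|//]].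
- by rewrite big_cons big_cons big_nil addr0.
Qed.

Lemma adjmxB m (A B : 'M[algC]_m) : adjmx (A - B) = adjmx A - adjmx B.
Proof. by apply/matrixP => i j; rewrite !mxE rmorphB. Qed.

Lemma adjmx1 m : adjmx (1%:M : 'M[algC]_m) = 1%:M.
Proof. by apply/matrixP => i j; rewrite !mxE rmorph_nat eq_sym. Qed.

Lemma adjmx_delta m n (i : 'I_m) (j : 'I_n) : adjmx (delta_mx i j) = delta_mx j i.
Proof. by apply/matrixP => r s; rewrite !mxE rmorph_nat andbC. Qed.

Lemma obs1 m : is_observable [:: (1%:M : 'M[algC]_m)].
Proof.
split; [|split].
- by move=> X; rewrite inE => /eqP->; split; rewrite ?adjmx1 ?mul1mx.
- by case=> [|//] [|//].
- by rewrite big_cons big_nil addr0.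
Qed.

Lemma obsE m (i : 'I_m) : is_observable [:: delta_mx i i; 1%:M - delta_mx i i].
Proof.
have hE : delta_mx i i *m delta_mx i i = delta_mx i i :> 'M[algC]_m by rewrite mul_delta_mx.
apply: obs2.
- by split; rewrite ?adjmx_delta.
- split; first by rewrite adjmxB adjmx1 adjmx_delta.
  by rewrite !mulmxBl !mulmxBr !mul1mx ?mulmx1 hE subrr subr0.
- by rewrite mulmxBr ?mulmx1 hE subrr.
- by rewrite mulmxBl mul1mx hE subrr.
- by rewrite addrC subrK.
Qed.


Lemma inL_subseq (Sigma : finType) (a x : seq Sigma) : inL a x <-> subseq a x.
Proof.
elim: a x => [|c a IH] x /=; first by split=> // _; exact: sub0seq.
split.
- move=> [u [v [-> /IH h]]].
  rewrite -[c :: a]cat0s; apply: cat_subseq; first exact: sub0seq.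
  by rewrite /= eqxx.
- elim: x => [|y x IHx] //=; case: eqP => [<- /IH h|_ /IHx [u [v [-> h]]]].
  + by exists [::], x.
  + by exists (y :: u), v.
Qed.

Lemma tr_delta n (i : 'I_n) (A : 'M[algC]_n) : \tr (delta_mx i i *m A) = A i i.
Proof.
rewrite /mxtrace (bigD1 i) //= big1 ?addr0.
- rewrite mxE (bigD1 i) //= mxE !eqxx mul1r big1 ?addr0 // => j hj.
  by rewrite mxE eqxx (negbTE hj) mul0r.
- move=> j hj; rewrite mxE big1 // => t _.
  by rewrite mxE (negbTE hj) mul0r.
Qed.

Lemma pw (n j : nat) : (2 ^+ (2 * n + j) : rat)^-1 = ((2 ^+ n)^-1)^+2 / 2 ^+ j.
Proof. by rewrite exprD mulnC exprM invfM exprVn. Qed.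

Lemma ratr_pw n : (2 ^+ n : algC)^-1 = ratr ((2 ^+ n : rat)^-1).
Proof. by rewrite fmorphV rmorphXn rmorph_nat. Qed.

Theorem theorem5 (Sigma : finType) (a : seq Sigma) :
  (1 <= size a)%N ->
  sorted (fun x y => x != y) a ->
  is_mon1qfa (A_constr a) /\
  recognizes_isolated (A_constr a) (inL a)
    ((2 ^+ (2 * size a).+1)^-1) ((2 ^+ (2 * (size a).+1))^-1).
Proof.
move=> hk Hs; split.
- split; [|split].
  + rewrite /= (bigD1 ord0) //= mxE !eqxx normr1 expr1n big1 ?addr0 // => i hi.
    by rewrite mxE (negbTE hi) andbF normr0 expr0n.
  + move=> c /=; case: ifP => _; last exact: obs1.
    apply: obs2; [exact: Pup_proj|exact: Pdn_proj|exact: Pupdn|exact: Pdnup|exact: Pupdn_sum].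
  + exact: obsE.
split; first by rewrite invr_gt0 exprn_gt0 // ltr0n.
move=> x.
set D0 : nat -> rat := fun r => (r == 0)%N%:R.
have h0 : forall r : 'I_(size a).+1, rho0 (A_constr a) r r = ratr (D0 r).
  move=> r; rewrite /rho0 /= adjmx_delta mul_delta_mx mxE ratr_nat /D0.
  by rewrite andbb.
have hI0 : Inv a D0 0.
  split; first by [].
  - by move=> r _; rewrite /D0; case: r => [|r] /=; rewrite ?ler01 ?lexx.
  - by move=> [|r] // _ _; rewrite /D0.
  - by rewrite expr0 invr1 /D0.
have hp : accept_prob (A_constr a) x = ratr (foldl (fD a) D0 x (size a)).
  rewrite /accept_prob /= big_cons big_nil addr0 tr_delta.
  by rewrite (diag_fold Hs x h0 ord_max).
have [hm hmono hz hb] := Inv_fold Hs x hI0.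
have hL : inL a x <-> foldl (fM a) 0 x = size a.
  by rewrite inL_subseq -(drop0 a) greedy // drop0; split=> /eqP.
rewrite hL hp.
set m := foldl (fM a) 0 x in hm hz hb hL *.
set Dk := foldl (fD a) D0 x.
case: (size a) hk hm hz hb (pw (size a)) => [//|k] _ hm hz hb hpw.
rewrite !ratr_pw -rmorphB -ratr_norm ler_rat ltr_rat.
rewrite -(addn1 (2 * k.+1)) hpw.
have -> : (2 * k.+2 = 2 * k.+1 + 2)%N by lia.
rewrite hpw.
set t := (2 ^+ k.+1 : rat)^-1.
have ht0 : 0 < t by rewrite invr_gt0 exprn_gt0.
have ht1 : t <= 2^-1.
  rewrite /t exprS invfM -[X in _ <= X]mulr1 ler_wpM2l //.
  by rewrite invf_le1 ?exprn_gt0 // exprn_ege1 // ler1n.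
have hT : t ^+ 2 <= t / 2 by rewrite expr2; nra.
have hT0 : 0 < t ^+ 2 by rewrite exprn_gt0.
move: (t ^+ 2) hT hT0 => T hT hT0.
rewrite expr1 expr2.
case: (ltngtP m k.+1) hm => // hmk _.
- rewrite /Dk hz //; split.
    split=> [e|h]; first by exfalso; move: hmk; rewrite e ltnn.
    by exfalso; move: h; apply/negP; rewrite -leNgt; lra.
  rewrite sub0r normrN ger0_norm; lra.
- move: hb; rewrite hmk -/t -/(Dk k.+1) => hb.
  split; first by split=> // _; lra.
  rewrite ger0_norm; lra.
Qed.
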